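(* Let $M := \langle X \mid R\rangle$ where $R$ is symmetric, and let $N$ be the additive submonoid of $\mathbb{Z}$ generated by $\{|a|-|b| : (a,b)\in R\}$. (1) If $a,b\in\langle X\rangle$ satisfy $a =_M b$, then $|a|-|b| \in N$. (2) Let $a,b \in\langle X\rangle$ be such that $a =_M b$, $|b|<|a|$, and there is no $c \in \mathsf{Z}_M(a)$ with $|b|<|c|<|a|$. Then there exist $e,f \in \langle X\rangle$ with $(e,f)\in R$ and $|a|-|b| \le |e|-|f|$. (3) For every $n \in N$ there exist $a,b\in\langle X\rangle$ with $a =_M b$ and $n = |a|-|b|$. (4) If $N \neq \{0\}$, then $N = d\mathbb{Z}$, where $d = \gcd(N) = \min(\Delta(M)) = \gcd(\Delta(M))$.
   Context: For a set $X$, $\langle X\rangle$ is the free monoid on $X$ (identity $1$); $M=\langle X\mid R\rangle$ is the monoid presented by generators $X$ and relations $R\subseteq\langle X\rangle\times\langle X\rangle$. $R$ is symmetric if $(a,b)\in R$ implies $(b,a)\in R$. For $a,b\in\langle X\rangle$, $a=_M b$ means equal images in $M$; $|a|$ is word length. $\mathsf{Z}_M(a) := \{b\in\langle X\rangle : b =_M a\}$, $\mathsf{L}_M(a) := \{|b| : b\in\mathsf{Z}_M(a)\}$, $\mathcal{L}(M) := \{\mathsf{L}_M(a): a\in\langle X\rangle\}$. For $L\subseteq\mathbb{N}$, $d\in\mathbb{N}^+$ is a distance of $L$ if $[k,k+d]\cap L=\{k,k+d\}$ for some $k\in L$; $\Delta(L)$ is the set of distances of $L$, and $\Delta(M) :=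 \bigcup_{L\in\mathcal{L}(M)}\Delta(L)$. *)

(* Defs.v *)
From mathcomp Require Import all_boot all_order all_algebra.
Set Implicit Arguments. Unset Strict Implicit. Unset Printing Implicit Defensive.
Import Order.TTheory GRing.Theory Num.Theory.

Section Pres.
Variable X : Type.
(* A presentation <X | R> with R a (possibly infinite) relation on the free monoid seq X. *)
Variable R : seq X -> seq X -> Prop.

Definition sym_rel : Prop := forall a b, R a b -> R b a.

Inductive pstep : seq X -> seq X -> Prop :=
  | pstep_intro u v a b : R a b -> pstep (u ++ a ++ v) (u ++ b ++ v).

(* a =_M b : the congruence generated by R (refl-sym-trans closure of pstep) *)
Inductive presEq : seq X -> seq X -> Prop :=
  | presEq_refl a : presEq a a
  | presEq_step a b : pstep a b -> presEq a b
  | presEq_sym a b : presEq a b -> presEq b a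
  | presEq_trans a b c : presEq a b -> presEq b c -> presEq a c.

Inductive inN : int -> Prop :=
  | inN0 : inN 0
  | inN_gen a b : R a b -> inN ((size a)%:Z - (size b)%:Z)%R
  | inN_add m n : inN m -> inN n -> inN (m + n)%R.

Definition factorizations (a : seq X) : seq X -> Prop := fun b => presEq b a.

Definition lengths (a : seq X) : nat -> Prop :=
  fun n => exists b, factorizations a b /\ size b = n.

End Pres.

Definition is_distance (L : nat -> Prop) (d : nat) : Prop :=
  (0 < d)%N /\ exists k, L k /\ L (k + d) /\ forall m, (k < m < k + d)%N -> ~ L m.

Definition DeltaM (X : Type) (R : seq X -> seq X -> Prop) (d : nat) : Prop :=
  exists a : seq X, is_distance (lengths R a) d.

(* Main.v *)
Require Import Defs.
From mathcomp Require Import all_boot all_order all_algebra.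
From mathcomp Require Import zify.
From Stdlib Require Import Classical.
Import Order.TTheory GRing.Theory Num.Theory.
Local Open Scope ring_scope.

Lemma nodiv (q d x : int) : 0 < d -> 0 < x < d -> x = q * d -> False.
Proof. move=> hd hx hq; rewrite hq in hx. have [h|h] : q <= 0 \/ 1 <= q by lia.
- have : q * d <= 0 by rewrite mulr_le0_ge0 // ltW. lia.
- have : d <= q * d by rewrite -{1}(mul1r d) ler_wpM2r // ltW. lia.
Qed.

Section H.
Variable X : Type.
Variable R : seq X -> seq X -> Prop.
Hypothesis HR : sym_rel R.

Lemma inN_opp n : inN R n -> inN R (- n).
Proof.
elim=> [|a b Hab|m k _ Hm _ Hk].
- by rewrite oppr0; constructor.
- rewrite opprB; apply: inN_gen; exact: HR.
- rewrite opprD; exact: inN_add.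
Qed.

Lemma pstep_sym a b : pstep R a b -> pstep R b a.
Proof. case=> u v e f H; apply: pstep_intro; exact: HR. Qed.

Lemma pstep_ctx x y s t : pstep R s t -> pstep R (x ++ s ++ y) (x ++ t ++ y).
Proof.
case=> u v e f H. have := pstep_intro (x ++ u) (v ++ y) H. by rewrite -!catA.
Qed.

Lemma presEq_ctx x y s t : presEq R s t -> presEq R (x ++ s ++ y) (x ++ t ++ y).
Proof.
elim=> [a|a b H|a b _ IH|a b c _ IH1 _ IH2].
- exact: presEq_refl.
- apply: presEq_step; exact: pstep_ctx.
- exact: presEq_sym.
- exact: presEq_trans IH1 IH2.
Qed.

Lemma part1 a b : presEq R a b -> inN R ((size a)%:Z - (size b)%:Z).
Proof.
elim=> [x|x y H|x y _ IH|x y z _ IH1 _ IH2].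
- rewrite subrr; constructor.
- case: H => u v e f Hef. rewrite !size_cat.
  have -> : ((size u + (size e + size v))%N%:Z - (size u + (size f + size v))%N%:Z)
           = (size e)%:Z - (size f)%:Z by lia.
  exact: inN_gen.
- have := inN_opp _ IH. by rewrite opprB.
- have := inN_add IH1 IH2.
  by have -> : (size x)%:Z - (size y)%:Z + ((size y)%:Z - (size z)%:Z)
            = (size x)%:Z - (size z)%:Z by lia.
Qed.

Lemma part3 n : inN R n -> exists a b : seq X, presEq R a b /\ n = (size a)%:Z - (size b)%:Z.
Proof.
elim=> [|a b H|m k _ [a1 [b1 [H1 E1]]] _ [a2 [b2 [H2 E2]]]].
- exists [::], [::]; split; [exact: presEq_refl|by []].
- exists a, b; split => //. apply: presEq_step.
  have := pstep_intro [::] [::] H. by rewrite /= !cats0.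
- exists (a1 ++ a2), (b1 ++ b2); split.
  + apply: (@presEq_trans _ _ _ (b1 ++ a2)).
    * have := presEq_ctx [::] a2 _ _ H1. by [].
    * have := presEq_ctx b1 [::] _ _ H2. by rewrite !cats0.
  + rewrite E1 E2 !size_cat. lia.
Qed.


Section P2.
Variables a b : seq X.
Hypothesis Hlt : (size b < size a)%N.
Hypothesis Hno : forall c, presEq R c a -> (size c <= size b)%N \/ (size a <= size c)%N.
Let G := exists e f : seq X, R e f /\
       (size a)%:Z - (size b)%:Z <= (size e)%:Z - (size f)%:Z.

Lemma part2_aux x y : presEq R x y -> presEq R x a ->
  ((size a <= size x)%N -> (size y <= size b)%N -> G) /\
  ((size x <= size b)%N -> (size a <= size y)%N -> G).
Proof.
elim=> {x y} [x|x y H|x y Hxy IH|x y z Hxy IH1 Hyz IH2] Hxa.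
- split=> h1 h2; lia.
- case: H Hxa => u v e f Hef Hxa; rewrite !size_cat; split=> h1 h2.
  + exists e, f; split => //; lia.
  + exists f, e; split; [exact: HR|lia].
- have Hxa' : presEq R x a by exact: presEq_trans Hxy Hxa.
  have [I1 I2] := IH Hxa'. split=> h1 h2; [exact: I2 h2 h1|exact: I1 h2 h1].
- have Hya : presEq R y a by exact: presEq_trans (presEq_sym Hxy) Hxa.
  have [I1 I2] := IH1 Hxa. have [J1 J2] := IH2 Hya.
  case: (Hno _ Hya) => hy; split=> h1 h2.
  + exact: I1 h1 hy.
  + exact: J2 hy h2.
  + exact: J1 hy h2.
  + exact: I2 h1 hy.
Qed.
End P2.

Lemma part2 a b : presEq R a b -> (size b < size a)%N ->
     ~ (exists c, factorizations R a c /\ (size b < size c < size a)%N) ->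
     exists e f : seq X, R e f /\
       (size a)%:Z - (size b)%:Z <= (size e)%:Z - (size f)%:Z.
Proof.
move=> Hab Hlt Hno.
have Hno' : forall c, presEq R c a -> (size c <= size b)%N \/ (size a <= size c)%N.
  move=> c Hc. have [h|h] := leqP (size a) (size c); first by right.
  have [h'|h'] := leqP (size c) (size b); first by left.
  by exfalso; apply: Hno; exists c; split => //; rewrite h h'.
have [I1 _] := @part2_aux a b Hlt Hno' a b Hab (presEq_refl _ _).
exact: I1.
Qed.

End H.

Lemma ex_min (P : nat -> Prop) n : P n -> exists m, P m /\ forall k, (k < m)%N -> ~ P k.
Proof.
elim: n {-2}n (leqnn n) => [|N IH] n hn Pn.
- exists n; split => // k hk; lia.
- case: (classic (exists k, (k < n)%N /\ P k)) => [[k [hk Pk]]|hno].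
  + apply: (IH k) => //; lia.
  + exists n; split => // k hk Pk; apply: hno; by exists k.
Qed.

Section P4.
Variable X : Type.
Variable R : seq X -> seq X -> Prop.
Hypothesis HR : sym_rel R.

Lemma inN_natmul d k : inN R d -> inN R (k%:Z * d).
Proof.
move=> Hd; elim: k => [|k IH]; first by rewrite mul0r; constructor.
have -> : k.+1%:Z * d = k%:Z * d + d by rewrite intS mulrDl mul1r addrC.
exact: inN_add.
Qed.

Lemma inN_mul d q : inN R d -> inN R (q * d).
Proof.
move=> Hd; case: q => k; first exact: inN_natmul.
rewrite NegzE mulNr; apply: (inN_opp X R HR _); exact: inN_natmul.
Qed.

Lemma part4 : (exists z : int, inN R z /\ z <> 0) ->
   exists d : nat,
     (forall z : int, inN R z <-> (d%:Z %| z)%Z) /\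
     ((forall z, inN R z -> (d%:Z %| z)%Z) /\
      (forall e : int, (forall z, inN R z -> (e %| z)%Z) -> (e %| d%:Z)%Z)) /\
     (DeltaM R d /\ forall d', DeltaM R d' -> (d <= d')%N) /\
     ((forall d', DeltaM R d' -> (d %| d')%N) /\
      (forall e : nat, (forall d', DeltaM R d' -> (e %| d')%N) -> (e %| d)%N)).
Proof.
case=> z [Hz z0].
have [n [n0 Hn]] : exists n, (0 < n)%N /\ inN R n%:Z.
  case: z Hz z0 => k Hk k0.
  - exists k; split => //; lia.
  - exists k.+1; split => //. have := inN_opp X R HR _ Hk. by rewrite NegzE opprK.
have [d [[d0 Hd] dmin]] := @ex_min (fun m => (0 < m)%N /\ inN R m%:Z) n (conj n0 Hn).
have Hchar : forall z : int, inN R z <-> (d%:Z %| z)%Z.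
  move=> w; split => [Hw|/dvdzP [q ->]]; last exact: inN_mul.
  apply/dvdzP; exists (w %/ d)%Z.
  have Hr : inN R (w %% d)%Z.
    have -> : (w %% d)%Z = w + (- (w %/ d)%Z) * d%:Z.
      have := divz_eq w d; lia.
    apply: inN_add => //; exact: inN_mul.
  have r0 : 0 <= (w %% d)%Z by apply: modz_ge0; lia.
  have r1 : (w %% d)%Z < d%:Z by apply: ltz_pmod; lia.
  have [re|rne] := eqVneq (w %% d)%Z 0.
    by rewrite {1}(divz_eq w d) re addr0.
  exfalso; apply: (dmin `|(w %% d)%Z|%N); first lia.
  split; first lia.
  by rewrite gez0_abs.
have Hdiv : forall z, inN R z -> (d%:Z %| z)%Z by move=> w /Hchar.
have HDelta : forall d', DeltaM R d' -> (d %| d')%N.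
  move=> d' [a [d'0 [k [[c1 [Hc1 s1]] [[c2 [Hc2 s2]] _]]]]].
  have := Hdiv _ (part1 X R HR _ _ (presEq_trans Hc2 (presEq_sym Hc1))).
  rewrite s1 s2 dvdzE /=.
  by have -> : `|(k + d')%N%:Z - k%:Z|%N = d' by lia.
have HdD : DeltaM R d.
  have [a [b [Hab E]]] := part3 X R _ Hd.
  exists a; split => //; exists (size b); split; first by exists b; split => //; exact: presEq_sym.
  split; first by exists a; split => //; [exact: presEq_refl | lia].
  move=> m /andP [m1 m2] [c [Hc sc]].
  have := Hdiv _ (part1 X R HR _ _ Hc) => /dvdzP [q Hq].
  apply: (@nodiv (q + 1) d%:Z (m%:Z - (size b)%:Z)); first lia.
    lia.
  rewrite mulrDl mul1r -Hq -sc. lia.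
exists d; split => //; split.
  split => // e He; exact: He.
split.
  split => // d' Hd'; apply: dvdn_leq; first by case: Hd' => ? [].
  exact: HDelta.
split => // e He; exact: He.
Qed.
End P4.

Theorem lemma4p2 (X : Type) (R : seq X -> seq X -> Prop) (HR : sym_rel R) :
  (* (1) *)
  (forall a b : seq X, presEq R a b ->
     inN R ((size a)%:Z - (size b)%:Z)) /\
  (* (2) *)
  (forall a b : seq X, presEq R a b -> (size b < size a)%N ->
     ~ (exists c, factorizations R a c /\ (size b < size c < size a)%N) ->
     exists e f : seq X, R e f /\
       (size a)%:Z - (size b)%:Z <= (size e)%:Z - (size f)%:Z) /\
  (* (3) *)
  (forall n : int, inN R n ->
     exists a b : seq X, presEq R a b /\ n = (size a)%:Z - (size b)%:Z) /\
  (* (4) *)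
  ((exists z : int, inN R z /\ z <> 0) ->
   exists d : nat,
     (* N = dZ *)
     (forall z : int, inN R z <-> (d%:Z %| z)%Z) /\
     (* d = gcd(N): d >= 0 divides every element of N, and every common divisor of N divides d *)
     ((forall z, inN R z -> (d%:Z %| z)%Z) /\
      (forall e : int, (forall z, inN R z -> (e %| z)%Z) -> (e %| d%:Z)%Z)) /\
     (* d = min Delta(M) *)
     (DeltaM R d /\ forall d', DeltaM R d' -> (d <= d')%N) /\
     (* d = gcd Delta(M) *)
     ((forall d', DeltaM R d' -> (d %| d')%N) /\
      (forall e : nat, (forall d', DeltaM R d' -> (e %| d')%N) -> (e %| d)%N))).
Proof.
split; first exact: part1 X R HR.
split; first exact: part2 X R HR.
split; first exact: part3 X R.
exact: part4 X R HR.
Qed.
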